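(* For every weighted digraph $D$ with $w(D)>0$, $\mathrm{mac}(D)\ge l(\theta(D))\cdot w(D)$.
   Context: A weighted digraph $D=(V,A,w)$ is a digraph without loops or parallel arcs (opposite arcs allowed) with weights $w:A\to\mathbb{R}_{\ge0}$; $w(D)$ is the total arc weight. For a partition $(X,Y)$ of $V$, $w(X,Y)$ is the total weight of arcs from $X$ to $Y$, and $\mathrm{mac}(D)=\max_{(X,Y)}w(X,Y)$. For $v\in V$, $r(v)=w^+(v)-w^-(v)$ where $w^+(v)$ ($w^-(v)$) is the total weight of arcs leaving (entering) $v$; $r^+(D)=\sum_{r(x)>0}r(x)$; and $\theta(D)=r^+(D)/w(D)\in[0,1]$. For $0\le\theta\le1$, $l(\theta)=\frac14+\frac{\theta^2}{4(1-2\theta)}$ if $\theta<1/3$ and $l(\theta)=\theta$ if $\theta\ge1/3$. *)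

(* Defs.v *)
From mathcomp Require Import all_boot all_order all_algebra.
Set Implicit Arguments. Unset Strict Implicit. Unset Printing Implicit Defensive.
Import Order.TTheory GRing.Theory Num.Theory.
Local Open Scope ring_scope.

(* A weighted digraph on the finite vertex set V: w x y is the weight of the arc
   x -> y; a pair with weight 0 is treated as "no arc" (this does not change any
   of the quantities below). *)
Definition weighted_digraph (R : realFieldType) (V : finType) (w : V -> V -> R) :=
  (forall x, w x x = 0) /\ (forall x y, 0 <= w x y).

Definition wtot (R : realFieldType) (V : finType) (w : V -> V -> R) : R :=
  \sum_(x : V) \sum_(y : V) w x y.

Definition wcut (R : realFieldType) (V : finType) (w : V -> V -> R) (X Y : {set V}) : R :=
  \sum_(x in X) \sum_(y in Y) w x y.

Definition mac (R : realFieldType) (V : finType) (w : V -> V -> R) : R :=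
  \big[Num.max/0]_(X : {set V}) wcut w X (~: X).

Definition wout (R : realFieldType) (V : finType) (w : V -> V -> R) (v : V) : R :=
  \sum_(y : V) w v y.
Definition win (R : realFieldType) (V : finType) (w : V -> V -> R) (v : V) : R :=
  \sum_(x : V) w x v.

Definition rdiff (R : realFieldType) (V : finType) (w : V -> V -> R) (v : V) : R :=
  wout w v - win w v.

Definition rplus (R : realFieldType) (V : finType) (w : V -> V -> R) : R :=
  \sum_(x : V | 0 < rdiff w x) rdiff w x.

Definition theta (R : realFieldType) (V : finType) (w : V -> V -> R) : R :=
  rplus w / wtot w.

Definition lfun (R : realFieldType) (t : R) : R :=
  if t < 3^-1 then 4^-1 + t ^+ 2 / (4 * (1 - 2 * t)) else t.

(* Main.v *)
Require Import Defs.
From mathcomp Require Import all_boot all_order all_algebra.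
From mathcomp Require Import ring lra.
Import Order.TTheory GRing.Theory Num.Theory.
Local Open Scope ring_scope.

Section Aux.
Variables (R : realFieldType) (V : finType) (w : V -> V -> R).

Definition FF (p : V -> R) : R := \sum_(x : V) \sum_(y : V) w x y * (p x * (1 - p y)).
Definition upd (p : V -> R) v t := fun x => if x == v then t else p x.
Definition ind x : R := if 0 < rdiff w x then 1 else 0.

Lemma sum2D (f g : V -> V -> R) :
  \sum_x \sum_y (f x y + g x y) = \sum_x \sum_y f x y + \sum_x \sum_y g x y.
Proof. rewrite -big_split; apply eq_bigr => x _; exact: big_split. Qed.

Lemma sum2Z c (f : V -> V -> R) :
  \sum_x \sum_y (c * f x y) = c * \sum_x \sum_y f x y.
Proof. rewrite mulr_sumr; apply eq_bigr => x _; by rewrite mulr_sumr. Qed.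

Lemma sum2le (f g : V -> V -> R) : (forall x y, f x y <= g x y) ->
  \sum_x \sum_y f x y <= \sum_x \sum_y g x y.
Proof. move=> H; apply ler_sum => x _; apply ler_sum => y _; exact: H. Qed.

Definition frac (p : V -> R) := [set x | (p x != 0) && (p x != 1)].

Lemma ind01 x : ind x = 0 \/ ind x = 1.
Proof. rewrite /ind; case: ifP => _; by [right|left]. Qed.

Lemma mac_ge X : wcut w X (~: X) <= mac w.
Proof.
rewrite /mac; have : X \in index_enum {set V} by rewrite mem_index_enum.
elim: (index_enum _) => [//|a s IH]; rewrite inE big_cons => /orP [/eqP->|/IH H].
  by rewrite le_max lexx.
by rewrite le_max H orbT.
Qed.

Hypothesis hloop : forall x, w x x = 0.
Hypothesis hnn : forall x y, 0 <= w x y.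

Lemma FF_affine p v :
  FF p = (1 - p v) * FF (upd p v 0) + p v * FF (upd p v 1).
Proof.
rewrite /FF !mulr_sumr -big_split; apply eq_bigr => x _.
rewrite !mulr_sumr -big_split; apply eq_bigr => y _ /=.
rewrite /upd; case: eqP => [Hx|Hx]; case: eqP => [Hy|Hy].
- by rewrite Hx Hy hloop; ring.
- by rewrite Hx; ring.
- by rewrite Hy; ring.
- ring.
Qed.

Lemma base_cut p : (forall x, p x = 0 \/ p x = 1) ->
  exists X : {set V}, FF p <= wcut w X (~: X).
Proof.
move=> H01; exists [set x | p x == 1].
suff -> : FF p = wcut w [set x | p x == 1] (~: [set x | p x == 1]) by [].
rewrite /FF /wcut [RHS]big_mkcond /=; apply eq_bigr => x _; rewrite inE.
case: (H01 x) => ->.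
  rewrite eq_sym oner_eq0 /= big1 // => y _; by rewrite mul0r mulr0.
rewrite eqxx [RHS]big_mkcond /=; apply eq_bigr => y _; rewrite !inE.
case: (H01 y) => ->; rewrite ?eqxx ?(eq_sym 0 1) ?oner_eq0 /=; ring.
Qed.

Lemma exists_cut (n : nat) : forall p : V -> R, (forall x, 0 <= p x <= 1) ->
  (#|frac p| <= n)%N ->
  exists X : {set V}, FF p <= wcut w X (~: X).
Proof.
elim: n => [|n IH] p Hp Hc.
  case: (pickP (fun x => (p x != 0) && (p x != 1))) => [v Hv|Hn].
    have : (0 < #|frac p|)%N.
      by apply/card_gt0P; exists v; rewrite inE.
    by rewrite leqNgt in Hc; rewrite (negbTE Hc).
  apply: base_cut => x; have := Hn x => /= /negbT; rewrite negb_and !negbK.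
  by case/orP => /eqP ->; [left|right].
case: (pickP (fun x => (p x != 0) && (p x != 1))) => [v Hv|Hn]; last first.
  apply: base_cut => x; have := Hn x => /= /negbT; rewrite negb_and !negbK.
  by case/orP => /eqP ->; [left|right].
set S := frac p in Hc.
have Hsub : forall t, t = 0 \/ t = 1 ->
    (#|frac (upd p v t)| <= n)%N.
  move=> t Ht.
  have HS : frac (upd p v t) \subset S :\ v.
    apply/subsetP => x; rewrite /frac !inE /upd; case: (eqVneq x v) => [->|hne] /=.
      by case: Ht => ->; rewrite ?eqxx ?andbF.
    by [].
  have := subset_leq_card HS.
  have := cardsD1 v S; rewrite (_ : v \in S) ?inE //= add1n => E.
  rewrite E ltnS in Hc; move=> H; exact: leq_trans H Hc.
have Hupd : forall t, 0 <= t <= 1 -> forall x, 0 <= upd p v t x <= 1.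
  by move=> t Ht x; rewrite /upd; case: eqP.
have [X0 H0] := IH _ (Hupd 0 ltac:(by rewrite lexx ler01)) (Hsub 0 (or_introl erefl)).
have [X1 H1] := IH _ (Hupd 1 ltac:(by rewrite lexx ler01)) (Hsub 1 (or_intror erefl)).
have := Hp v => /andP [h0 h1].
rewrite (FF_affine p v).
case: (lerP (FF (upd p v 0)) (FF (upd p v 1))) => Hle.
  exists X1; nra.
exists X0; nra.
Qed.

Lemma FF_le_mac p : (forall x, 0 <= p x <= 1) -> FF p <= mac w.
Proof.
move=> Hp; have [X HX] := @exists_cut _ p Hp (leqnn _).
exact: le_trans HX (mac_ge X).
Qed.

Lemma rplus_eq : rplus w = \sum_x \sum_y w x y * (ind x - ind y).
Proof.
have -> : rplus w = \sum_x ind x * rdiff w x.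
  rewrite /rplus big_mkcond; apply eq_bigr => x _; rewrite /ind.
  by case: ifP; rewrite ?mul1r ?mul0r.
have -> : \sum_x \sum_y w x y * (ind x - ind y) =
   \sum_x \sum_y (w x y * ind x) + \sum_x \sum_y (- (w x y * ind y)).
  rewrite -sum2D; apply eq_bigr => x _; apply eq_bigr => y _; ring.
rewrite [X in _ + X]exchange_big /=.
rewrite -big_split /=; apply eq_bigr => x _.
rewrite /rdiff /wout /win mulrBr !mulr_sumr sumrN; congr (_ - _).
  by apply eq_bigr => y _; rewrite mulrC.
by apply eq_bigr => y _; rewrite mulrC.
Qed.

Lemma rplus_le_ind : rplus w <= FF ind.
Proof.
rewrite rplus_eq /FF; apply sum2le => x y.
have hw := hnn x y.
by case: (ind01 x) => ->; case: (ind01 y) => ->; nra.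
Qed.

Lemma FF_lower a : 0 <= a ->
  4^-1 * wtot w + a * rplus w - a^2 * wtot w + 2 * a^2 * rplus w
  <= FF (fun x => 2^-1 + a * (2 * ind x - 1)).
Proof.
move=> ha.
pose L x y := 4^-1 * w x y + a * (w x y * (ind x - ind y)) + (- a^2) * w x y
   + (2 * a^2) * (w x y * (ind x * (1 - ind y))).
apply: (@le_trans _ _ (\sum_x \sum_y L x y)).
  rewrite /L !sum2D !sum2Z -rplus_eq -/(FF ind).
  have := rplus_le_ind; have h2 : 0 <= 2 * a^2 by nra.
  rewrite /wtot; nra.
rewrite /FF; apply sum2le => x y; rewrite /L.
have hw := hnn x y; have h3 : 0 <= a^2 * w x y by nra.
by case: (ind01 x) => ->; case: (ind01 y) => ->; nra.
Qed.

End Aux.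
Arguments ind {R V} w x.
Arguments FF {R V} w p.
Arguments ind01 {R V} w x.
Arguments FF_le_mac {R V w}.
Arguments FF_lower {R V w}.
Arguments rplus_le_ind {R V w}.

Theorem mainTheorem6 (R : realFieldType) (V : finType) (w : V -> V -> R) :
  weighted_digraph w -> 0 < wtot w ->
  lfun (theta w) * wtot w <= mac w.
Proof.
move=> [hloop hnn] hW.
set W := wtot w.
have hr0 : 0 <= rplus w by rewrite /rplus; apply sumr_ge0 => x /ltW.
have hrt : rplus w = theta w * W by rewrite /theta divfK // gt_eqF.
have ht0 : 0 <= theta w by rewrite /theta divr_ge0 // ltW.
have hind : forall x, 0 <= ind w x <= 1.
  by move=> x; case: (ind01 w x) => ->; rewrite ?lexx ?ler01.
rewrite /lfun; case: ifP => Ht.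
  set t := theta w in Ht ht0 hrt *.
  pose a := t / (2 * (1 - 2 * t)).
  have hd : 0 < 1 - 2 * t by lra.
  have ha0 : 0 <= a by rewrite /a divr_ge0 //; lra.
  have ha1 : a <= 2^-1.
    rewrite /a ler_pdivrMr; last by lra.
    lra.
  have hp : forall x, 0 <= 2^-1 + a * (2 * ind w x - 1) <= 1.
    by move=> x; case: (ind01 w x) => ->; apply/andP; split; lra.
  have := FF_le_mac hloop _ hp.
  have := FF_lower hnn _ ha0.
  rewrite -/W hrt.
  have -> : 4^-1 * W + a * (t * W) - a ^ 2 * W + 2 * a ^ 2 * (t * W) =
           (4^-1 + t ^+ 2 / (4 * (1 - 2 * t))) * W.
    rewrite /a; field; lra.
  exact: le_trans.
rewrite -hrt.
apply: le_trans (rplus_le_ind hnn) _.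
exact: FF_le_mac hloop _ hind.
Qed.
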